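(* There exists a setting (with pairwise distinct budgets) in which no envy-free assignment is realizable under the budget-oblivious second-price auction (BOSP).
   Context: Setting: there are $k\ge 1$ slots with public click-through rates $\theta_1>\theta_2>\dots>\theta_k>0$, and $n\ge k$ players. Player $i$ has a private value per click $v_i\ge 0$ and a budget $B_i>0$; the budgets $B_1,\dots,B_n$ are pairwise distinct. A setting consists of $k,n,(\theta_j),(v_i),(B_i)$ together with a fixed strict priority order on the players used to break all ties. Each player $i$ submits a value-bid $b_i\ge 0$ and a budget-bid $g_i\ge 0$; a mechanism outputs an injective partial slot assignment (assigned player $i$ gets slot $s(i)\in\{1,\dots,k\}$) and a price per click $p(i)\ge0$ for each assigned player; unassigned players pay nothing. The utility of player $i$ is $u_i=0$ if $i$ is unassigned, $u_i=\theta_{s(i)}(v_i-p(i))$ if $i$ is assigned and $\theta_{s(i)}p(i)\le B_i$, and $u_i=-\infty$ if $i$ is assigned and $\theta_{s(i)}p(i)>B_i$. BOSP: order the players by decreasing value-bid (ties broken by the priority order); for $j\le k$ the $j$-th player in this order gets slot $j$ and pays per click the value-bid of the $(j+1)$-th player in the order (0 if there is none); the remaining players are unassigned. Budget-bids are ignored. Envy-free assignment: an assignment of each of the $k$ slots to a distinct player, with a price per click $p(i)\ge 0$ for each assigned player $i$, such that for every player $i$ (assigned or not) and every assigned player $i'$ (including $i'=i$): $u_i\ge \max\{\theta_{s(i')}(v_i-p(i')),0\}$ if $\theta_{s(i')}p(i')\le B_i$, and $u_i\ge 0$ otherwise, where $u_i$ is player $i$'s utility in the assignment (computed with the true $v_i,B_i$).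 It is realizable under a mechanism if some bid profile $(b_i,g_i)_i$ makes the mechanism output exactly this slot assignment and these prices. *)

(* Defs.v *)
From Stdlib Require Import Reals Lra Arith List.
Import ListNotations.
Open Scope R_scope.

(* Players are 0..n-1, slots are 1..k.  An outcome is a partial slot
   assignment [s : nat -> option nat] and per-click prices [p : nat -> R]
   (only meaningful for assigned players).  The tie-breaking priority order
   is given by an injective rank function [prio] on the players: a smaller
   rank means higher priority. *)

Definition valid_setting (k n : nat) (theta v B : nat -> R) (prio : nat -> nat) : Prop :=
  (1 <= k)%nat /\ (k <= n)%nat /\
  (forall j, (1 <= j)%nat -> (j < k)%nat -> theta (S j) < theta j) /\
  0 < theta k /\
  (forall i, (i < n)%nat -> 0 <= v i) /\
  (forall i, (i < n)%nat -> 0 < B i) /\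
  (forall i i', (i < n)%nat -> (i' < n)%nat -> B i = B i' -> i = i') /\
  (forall i i', (i < n)%nat -> (i' < n)%nat -> prio i = prio i' -> i = i').

(* Extended-real utility: [None] stands for -infinity. *)
Definition utility (theta v B : nat -> R) (s : nat -> option nat) (p : nat -> R)
  (i : nat) : option R :=
  match s i with
  | None => Some 0
  | Some j => if Rle_dec (theta j * p i) (B i)
              then Some (theta j * (v i - p i)) else None
  end.

Definition ext_ge (u : option R) (x : R) : Prop :=
  match u with Some r => x <= r | None => False end.

Definition full_assignment (k n : nat) (s : nat -> option nat) (p : nat -> R) : Prop :=
  (forall i j, s i = Some j -> (i < n)%nat /\ (1 <= j)%nat /\ (j <= k)%nat /\ 0 <= p i) /\
  (forall i i' j, s i = Some j -> s i' = Some j -> i = i') /\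
  (forall j, (1 <= j)%nat -> (j <= k)%nat -> exists i, s i = Some j).

Definition envy_free (k n : nat) (theta v B : nat -> R)
  (s : nat -> option nat) (p : nat -> R) : Prop :=
  full_assignment k n s p /\
  forall i i' j, (i < n)%nat -> s i' = Some j ->
    (theta j * p i' <= B i ->
       ext_ge (utility theta v B s p i) (Rmax (theta j * (v i - p i')) 0)) /\
    (~ theta j * p i' <= B i -> ext_ge (utility theta v B s p i) 0).

Definition precedes (prio : nat -> nat) (b : nat -> R) (i' i : nat) : bool :=
  if Rlt_dec (b i) (b i') then true
  else if Req_EM_T (b i') (b i) then Nat.ltb (prio i') (prio i) else false.

(* 0-based position of player i in the order. *)
Definition position (n : nat) (prio : nat -> nat) (b : nat -> R) (i : nat) : nat :=
  length (filter (fun i' => precedes prio b i' i) (seq 0 n)).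

(* The outcome (s, p) is the output of BOSP on value-bids b (budget-bids are
   ignored): the player at 0-based position q < k gets slot q+1 and pays the
   value-bid of the player at position q+1 (0 if there is none); others are
   unassigned. *)
Definition bosp_outputs (k n : nat) (prio : nat -> nat) (b : nat -> R)
  (s : nat -> option nat) (p : nat -> R) : Prop :=
  (forall i, (n <= i)%nat -> s i = None) /\
  forall i, (i < n)%nat ->
    let q := position n prio b i in
    if Nat.ltb q k then
      s i = Some (S q) /\
      ((exists i', (i' < n)%nat /\ position n prio b i' = S q /\ p i = b i') \/
       ((forall i', (i' < n)%nat -> position n prio b i' <> S q) /\ p i = 0))
    else s i = None.

(* Realizable under BOSP: some bid profile (value-bids b, budget-bids g)
   makes BOSP output exactly this slot assignment and these prices. *)
Definition realizable_BOSP (k n : nat) (prio : nat -> nat)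
  (s : nat -> option nat) (p : nat -> R) : Prop :=
  exists b g : nat -> R,
    (forall i, (i < n)%nat -> 0 <= b i /\ 0 <= g i) /\
    bosp_outputs k n prio b s p.

(* Main.v *)
Require Import Defs.
From Stdlib Require Import Reals.
From Stdlib Require Import Lra Lia Arith List.
Open Scope R_scope.

Lemma position3 prio b i : position 3 prio b i =
  (Nat.b2n (precedes prio b 0 i) + Nat.b2n (precedes prio b 1 i) + Nat.b2n (precedes prio b 2 i))%nat.
Proof.
  unfold position; simpl.
  destruct (precedes prio b 0 i), (precedes prio b 1 i), (precedes prio b 2 i); reflexivity.
Qed.

Lemma prec_false prio b i' i : precedes prio b i' i = false -> b i' <= b i.
Proof. unfold precedes. destruct (Rlt_dec (b i) (b i')); [discriminate|lra]. Qed.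

Lemma prec_true prio b i' i : b i < b i' -> precedes prio b i' i = true.
Proof. unfold precedes. destruct (Rlt_dec (b i) (b i')); [reflexivity|lra]. Qed.

Lemma bosp_price prio b s p x y :
  (forall i, (i < 3)%nat -> 0 <= b i) ->
  bosp_outputs 2 3 prio b s p ->
  (forall i i' j, s i = Some j -> s i' = Some j -> i = i') ->
  s x = Some 1%nat -> s y = Some 2%nat -> p y <= p x.
Proof.
  intros Hbnn [Hnone Hb] Hinj Hx Hy.
  assert (x3 : (x < 3)%nat).
  { destruct (Nat.lt_ge_cases x 3) as [h|h]; auto. rewrite Hnone in Hx; auto; discriminate. }
  assert (y3 : (y < 3)%nat).
  { destruct (Nat.lt_ge_cases y 3) as [h|h]; auto. rewrite Hnone in Hy; auto; discriminate. }
  assert (Px := Hb x x3). assert (Py := Hb y y3). cbv zeta in Px, Py.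
  destruct (Nat.ltb (position 3 prio b x) 2) eqn:Ex; [|congruence].
  destruct (Nat.ltb (position 3 prio b y) 2) eqn:Ey; [|congruence].
  destruct Px as [Sx Ppx]. destruct Py as [Sy Ppy].
  rewrite Hx in Sx. rewrite Hy in Sy. injection Sx as Sx. injection Sy as Sy.
  symmetry in Sx, Sy.
  assert (pxy : p x = b y).
  { destruct Ppx as [[i' [i3 [Hi' E]]] | [H _]].
    - assert (Hq := Hb i' i3). cbv zeta in Hq. rewrite Hi', Sx in Hq. simpl in Hq.
      destruct Hq as [Si _].
      assert (i' = y) by (eapply Hinj; [exact Si| exact Hy]). subst; auto.
    - exfalso; apply (H y y3); lia. }
  rewrite pxy.
  destruct Ppy as [[z [z3 [Pz E]]] | [_ E]].
  - rewrite E. destruct (Rle_lt_dec (b z) (b y)) as [h|h]; auto. exfalso.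
    assert (h1 : precedes prio b z y = true) by (apply prec_true; auto).
    assert (h2 : precedes prio b z x = false).
    { rewrite position3 in Sx.
      destruct (precedes prio b 0 x) eqn:e0, (precedes prio b 1 x) eqn:e1,
        (precedes prio b 2 x) eqn:e2; simpl in Sx; try lia.
      destruct z as [|[|[|]]]; try lia; auto. }
    apply prec_false in h2.
    assert (h3 : precedes prio b x y = true) by (apply prec_true; lra).
    rewrite position3 in Sy.
    assert (xz : x <> z) by congruence.
    destruct x as [|[|[|]]]; try lia; destruct z as [|[|[|]]]; try lia;
    rewrite ?h1, ?h3 in Sy; simpl in Sy; lia.
  - rewrite E. apply Hbnn; auto.
Qed.

Definition th (j : nat) : R := match j with 1%nat => 2 | _ => 1 end.
Definition vv (i : nat) : R := match i with 0%nat => 2 | _ => 3 end.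
Definition BB (i : nat) : R := match i with 0%nat => 4 | 1%nat => 2 | _ => 3 end.

Lemma Rmax_le_split a c r : Rmax a c <= r -> a <= r /\ c <= r.
Proof. unfold Rmax; destruct (Rle_dec a c); lra. Qed.

Ltac split_ef :=
  repeat match goal with
  | H : (?a <= ?c -> _) /\ (~ ?a <= ?c -> _) |- _ =>
      let h := fresh "h" in let h' := fresh "h" in
      destruct (Rle_dec a c) as [h'|h'];
      [pose proof (proj1 H h') as h | pose proof (proj2 H h') as h];
      try (apply Rnot_le_lt in h'); clear H; simpl in h;
      try (apply Rmax_le_split in h; destruct h as [?h ?h]);
      try lra
  end.

Theorem corollary1 :
  exists (k n : nat) (theta v B : nat -> R) (prio : nat -> nat),
    valid_setting k n theta v B prio /\
    ~ (exists (s : nat -> option nat) (p : nat -> R),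
         envy_free k n theta v B s p /\ realizable_BOSP k n prio s p).
Proof.
  exists 2%nat, 3%nat, th, vv, BB, (fun i => i). split.
  { unfold valid_setting. repeat split; try lia.
    - intros j h1 h2. assert (j = 1%nat) by lia. subst. simpl. lra.
    - simpl; lra.
    - intros i h. destruct i as [|[|[|]]]; simpl; lra.
    - intros i h. destruct i as [|[|[|]]]; simpl; lra.
    - intros i i' h h' e. destruct i as [|[|[|]]]; destruct i' as [|[|[|]]];
        simpl in e; try lia; lra. }
  intros [s [p [[FA EF] [b [g [Hbnn HB]]]]]].
  destruct FA as [F1 [F2 F3]].
  destruct (F3 1%nat) as [x Hx]; try lia.
  destruct (F3 2%nat) as [y Hy]; try lia.
  assert (Hpp : p y <= p x).
  { eapply bosp_price; eauto. intros i h; apply (Hbnn i h). }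
  destruct (F1 _ _ Hx) as [x3 [_ [_ px0]]].
  destruct (F1 _ _ Hy) as [y3 [_ [_ py0]]].
  assert (xy : x <> y) by congruence.
  assert (Hu : forall u, (u < 3)%nat -> u <> x -> u <> y -> s u = None).
  { intros u u3 ux uy. destruct (s u) as [j|] eqn:Su; auto.
    destruct (F1 _ _ Su) as [_ [j1 [j2 _]]].
    assert (j = 1%nat \/ j = 2%nat) as [->| ->] by lia.
    - exfalso; apply ux; eapply F2; eauto.
    - exfalso; apply uy; eapply F2; eauto. }
  assert (exists u, (u < 3)%nat /\ u <> x /\ u <> y) as [u [u3 [ux uy]]].
  { destruct x as [|[|[|]]]; destruct y as [|[|[|]]]; try lia;
    first [exists 0%nat; lia | exists 1%nat; lia | exists 2%nat; lia]. }
  assert (Su := Hu u u3 ux uy).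
  pose proof (EF x x 1%nat x3 Hx) as E1.
  pose proof (EF x y 2%nat x3 Hy) as E2.
  pose proof (EF y x 1%nat y3 Hx) as E3.
  pose proof (EF y y 2%nat y3 Hy) as E4.
  pose proof (EF u x 1%nat u3 Hx) as E5.
  pose proof (EF u y 2%nat u3 Hy) as E6.
  clear EF Hu F1 F2 F3 HB Hbnn.
  unfold utility in E1, E2, E3, E4, E5, E6.
  rewrite Hx in E1, E2. rewrite Hy in E3, E4. rewrite Su in E5, E6.
  destruct x as [|[|[|]]]; try lia; destruct y as [|[|[|]]]; try lia;
  destruct u as [|[|[|]]]; try lia; simpl th in *; simpl vv in *; simpl BB in *;
  destruct (Rle_dec (2 * p _) _); try (destruct E1 as [E1 _]; simpl in E1; lra);
  destruct (Rle_dec (1 * p _) _); try (destruct E4 as [E4 _]; simpl in E4; lra);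
  split_ef.
Qed.
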